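(* Let $G_0=(V_0,E_0)$ be a finite graph ($|V_0|<\infty$) and let $(\xi_t)_{t\ge0}$ be the multi-virus contact process on $G_0$ with infection rate $\lambda$, recovery rate $1$ and death function $\phi$. Then for every $\lambda>0$, $$P_\lambda(\xi_t\neq\emptyset \ \text{for all } t)=0,$$ i.e. the process dies out.
   Context: Multi-virus contact process (MVCP): on a graph $G_0=(V_0,E_0)$, $(\xi_t)_{t\ge0}$ is a continuous-time Markov process on $(\mathbb{N}\cup\{\emptyset\})^{V_0}$ ($\mathbb{N}$ includes $0$), where $\xi_t(x)=i$ means node $x$ carries $i$ infections at time $t$ ($0$ = healthy) and $\xi_t(x)=\emptyset$ means $x$ is dead. A function $\phi:\mathbb{N}\to[0,1]$ is non-decreasing with $\phi(0)=0$ and $\phi(k)=1$ for all $k\ge M$, for some constant $M\in\mathbb{N}$. Dynamics: each infection heals independently at rate $1$ (so a live node with $\zeta(x)\ge1$ infections loses one at rate $\zeta(x)$); each infection passes to each current neighbor independently at rate $\lambda$, so a live node $x$ receives an infection at rate $\lambda N_\zeta(x)$, where $N_\zeta(x)=\sum_{y\sim x}\zeta(y)$ sums over neighbors still joined to $x$ by an edge. When a node currently carrying $i$ infections receives an infection, with probability $\phi(i+1)$ it dies, and otherwise its count becomes $i+1$. When a node dies, it, all infections on it, and all edges incident to it are removed from the graph. We write $\xi_t=\emptyset$ if $\xi_t(x)\in\{0,\emptyset\}$ for all $x$. The process dies out if $P_\lambda(\xi_t\ne\emptyset\ \forall t)=0$ and survives if this probability is positive. *)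

(* Defs.v *)
From HB Require Import structures.
From mathcomp Require Import all_boot all_order all_algebra.
From mathcomp Require Import all_classical all_reals all_analysis.
Set Implicit Arguments. Unset Strict Implicit. Unset Printing Implicit Defensive.
Import Order.TTheory GRing.Theory Num.Theory.
Local Open Scope ring_scope.

(* A configuration of the MVCP on the vertex set V:
   [Some i] = alive with i infections, [None] = dead. *)
Definition config (V : finType) := V -> option nat.

Section MVCP.
Variables (R : realType) (V : finType) (e : rel V).
Variables (lam : R) (phi : nat -> R).

Definition alive (z : config V) (x : V) : bool := z x != None.
Definition cnt (z : config V) (x : V) : nat := if z x is Some i then i else 0%N.

(* xi = "emptyset": every node is healthy or dead *)
Definition is_empty (z : config V) : bool := [forall x, cnt z x == 0%N].

Definition upd (z : config V) (x : V) (v : option nat) : config V :=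
  fun y => if y == x then v else z y.

(* N_z(x): infections on neighbours still joined to x (dead nodes lose edges) *)
Definition nbr_load (z : config V) (x : V) : nat :=
  \sum_(y | e x y && alive z y) cnt z y.

Definition heal_rate (z : config V) (x : V) : R := (cnt z x)%:R.
Definition inf_rate (z : config V) (x : V) : R :=
  if alive z x then lam * (nbr_load z x)%:R else 0.
Definition total_rate (z : config V) : R :=
  \sum_x (heal_rate z x + inf_rate z x).

(* Probability that the embedded jump chain of the MVCP started at z has not
   reached the empty set during its first n jumps. Each infection arriving at
   a node with i infections kills it w.p. phi(i+1), otherwise count -> i+1. *)
Fixpoint surv_within (n : nat) (z : config V) : R :=
  if is_empty z then 0 else
  match n with
  | 0%N => 1
  | n'.+1 =>
      (\sum_x ( heal_rate z x * surv_within n' (upd z x (Some (cnt z x).-1))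
              + inf_rate z x *
                  ( phi (cnt z x).+1 * surv_within n' (upd z x None)
                  + (1 - phi (cnt z x).+1)
                      * surv_within n' (upd z x (Some (cnt z x).+1)))))
      / total_rate z
  end.

End MVCP.

(* Main.v *)
Require Import Defs.
From HB Require Import structures.
From mathcomp Require Import all_boot all_order all_algebra.
From mathcomp Require Import all_classical all_reals all_analysis.
From mathcomp Require Import lra zify.
Import Order.TTheory GRing.Theory Num.Theory.
Local Open Scope classical_set_scope.
Local Open Scope ring_scope.

Section Proof.
Variables (R : realType) (V : finType) (e : rel V) (lam : R) (phi : nat -> R).
Hypothesis lam_gt0 : 0 < lam.
Hypothesis phi_range : forall k : nat, 0 <= phi k <= 1.

Implicit Types z : config V.
Local Notation S n z := (surv_within e lam phi n z).

Definition Tn (z : config V) : nat := (\sum_x cnt z x)%N.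
Definition ocnt (v : option nat) : nat := if v is Some i then i else 0%N.
Definition Itot (z : config V) : R := \sum_x inf_rate e lam z x.

Lemma phi0' k : 0 <= phi k. Proof. by case/andP: (phi_range k). Qed.
Lemma phi1' k : phi k <= 1. Proof. by case/andP: (phi_range k). Qed.

Lemma heal_ge0 (z : config V) x : 0 <= heal_rate R z x. Proof. by rewrite /heal_rate ler0n. Qed.
Lemma inf_ge0 z x : 0 <= inf_rate e lam z x.
Proof. rewrite /inf_rate; case: ifP => // _; apply: mulr_ge0; [exact: ltW|exact: ler0n]. Qed.

Lemma Itot_ge0 z : 0 <= Itot z.
Proof. by apply: sumr_ge0 => x _; exact: inf_ge0. Qed.

Lemma total_rateE z : total_rate e lam z = (Tn z)%:R + Itot z.
Proof. by rewrite /total_rate big_split /= /Tn natr_sum. Qed.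

Lemma Tn_pos z : ~~ is_empty z -> (0 < Tn z)%N.
Proof.
move=> /forallPn [x hx]; rewrite /Tn (bigD1 x) //=.
move: hx; rewrite eqn0Ngt negbK => hx; exact: leq_trans hx (leq_addr _ _).
Qed.

Lemma total_pos z : ~~ is_empty z -> 0 < total_rate e lam z.
Proof.
move=> h; rewrite total_rateE; apply: (@lt_le_trans _ _ (Tn z)%:R).
  by rewrite ltr0n Tn_pos.
by rewrite lerDl Itot_ge0.
Qed.

Lemma nbr_le z x : (nbr_load e z x <= Tn z)%N.
Proof.
rewrite /nbr_load /Tn big_mkcond /=; apply: leq_sum => y _; by case: ifP.
Qed.

Lemma Itot_le z : Itot z <= #|V|%:R * (lam * (Tn z)%:R).
Proof.
have -> : #|V|%:R * (lam * (Tn z)%:R) = \sum_(x : V) (lam * (Tn z)%:R).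
  by rewrite sumr_const mulr_natl.
apply: ler_sum => x _; rewrite /inf_rate; case: ifP => _.
  by apply: ler_wpM2l; [exact: ltW | rewrite ler_nat; exact: nbr_le].
by apply: mulr_ge0; [exact: ltW|exact: ler0n].
Qed.

Lemma cnt_upd z x v y : cnt (upd z x v) y = if y == x then ocnt v else cnt z y.
Proof. by rewrite /cnt /upd; case: (y == x). Qed.

Lemma Tn_upd z x v : (Tn (upd z x v) + cnt z x = Tn z + ocnt v)%N.
Proof.
rewrite /Tn (bigD1 x) //= [X in (_ = X + _)%N](bigD1 x) //= cnt_upd eqxx.
rewrite (eq_bigr (fun y => cnt z y)); last by move=> y /negbTE hy; rewrite cnt_upd hy.
lia.
Qed.

Lemma survSE n z : ~~ is_empty z -> S n.+1 z =
  (\sum_x ( heal_rate R z x * S n (upd z x (Some (cnt z x).-1))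
              + inf_rate e lam z x *
                  ( phi (cnt z x).+1 * S n (upd z x None)
                  + (1 - phi (cnt z x).+1)
                      * S n (upd z x (Some (cnt z x).+1)))))
      / total_rate e lam z.
Proof. by move=> h /=; rewrite (negbTE h). Qed.

Lemma step_bound n z (a b : R) : ~~ is_empty z ->
  (forall x, heal_rate R z x * S n (upd z x (Some (cnt z x).-1)) <= heal_rate R z x * a) ->
  (forall x, inf_rate e lam z x * ( phi (cnt z x).+1 * S n (upd z x None)
                  + (1 - phi (cnt z x).+1) * S n (upd z x (Some (cnt z x).+1)))
             <= inf_rate e lam z x * b) ->
  S n.+1 z <= ((Tn z)%:R * a + Itot z * b) / total_rate e lam z.
Proof.
move=> h h1 h2; rewrite survSE // ler_pM2r ?invr_gt0 ?total_pos //.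
apply: le_trans (ler_sum _ (fun x _ => lerD (h1 x) (h2 x))) _.
by rewrite big_split /= -!mulr_suml /Tn natr_sum.
Qed.

Lemma surv_ge0 n z : 0 <= S n z.
Proof.
elim: n z => [|n IH] z /=; case: ifP => // _.
apply: divr_ge0; last by rewrite /total_rate; apply: sumr_ge0 => x _;
  apply: addr_ge0; [exact: heal_ge0|exact: inf_ge0].
apply: sumr_ge0 => x _; apply: addr_ge0; apply: mulr_ge0;
  rewrite ?heal_ge0 ?inf_ge0 ?IH //.
apply: addr_ge0; apply: mulr_ge0; rewrite ?IH ?phi0' // subr_ge0 phi1' //.
Qed.

Lemma surv_le1 n z : S n z <= 1.
Proof.
elim: n z => [|n IH] z; first by rewrite /=; case: ifP.
case: (boolP (is_empty z)) => h; first by rewrite /= h.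
apply: (le_trans (@step_bound n z 1 1 h _ _)).
- by move=> x; rewrite ler_wpM2l ?heal_ge0.
- move=> x; rewrite ler_wpM2l ?inf_ge0 //.
  have := IH (upd z x None); have := IH (upd z x (Some (cnt z x).+1)).
  have := phi0' (cnt z x).+1; have := phi1' (cnt z x).+1.
  move=> ? ? ? ?; nra.
by rewrite !mulr1 -total_rateE divff // gt_eqF // total_pos.
Qed.

Lemma surv_empty n z : is_empty z -> S n z = 0.
Proof. by case: n => [|n] /= ->. Qed.

Lemma surv_mono n z : S n.+1 z <= S n z.
Proof.
elim: n z => [|n IH] z; (case: (boolP (is_empty z)) => h;
  first by rewrite !surv_empty).
  by rewrite [S 0 z]/= (negbTE h) surv_le1.
rewrite (survSE n.+1) // (survSE n) // ler_pM2r ?invr_gt0 ?total_pos //.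
apply: ler_sum => x _; apply: lerD.
  by apply: ler_wpM2l; [exact: heal_ge0 | exact: IH].
apply: ler_wpM2l; first exact: inf_ge0.
apply: lerD; apply: ler_wpM2l; rewrite ?IH ?phi0' // subr_ge0 phi1' //.
Qed.

Lemma surv_monoN m k z : S (m + k) z <= S m z.
Proof.
elim: k z => [|k IH] z; first by rewrite addn0.
by rewrite addnS; apply: le_trans (surv_mono _ _) (IH z).
Qed.

Lemma cnt_le_Tn z x : (cnt z x <= Tn z)%N.
Proof. by rewrite /Tn (bigD1 x) //= leq_addr. Qed.

Variable (M K : nat).
Hypothesis phiM : forall k : nat, (M <= k)%N -> phi k = 1.
Hypothesis MK : (M <= K)%N.

Definition inS z := forall x, (cnt z x <= K)%N.
Definition q : R := (1 + #|V|%:R * lam)^-1.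

Lemma den_gt0 : 0 < 1 + #|V|%:R * lam.
Proof. have h1 := ltW lam_gt0; have h2 : 0 <= #|V|%:R :> R := ler0n _ _; nra. Qed.

Lemma q_gt0 : 0 < q.
Proof. by rewrite /q invr_gt0 den_gt0. Qed.

Lemma q_le1 : q <= 1.
Proof.
rewrite /q invr_le1 ?den_gt0 ?unitf_gt0 ?den_gt0 //.
have h1 := ltW lam_gt0; have h2 : 0 <= #|V|%:R :> R := ler0n _ _; nra.
Qed.

Lemma qn_ge0 n : 0 <= q ^+ n.
Proof. exact/exprn_ge0/ltW/q_gt0. Qed.
Lemma qn_le1 n : q ^+ n <= 1.
Proof. apply: exprn_ile1; [exact/ltW/q_gt0 | exact: q_le1]. Qed.

Lemma qW z : q * total_rate e lam z <= (Tn z)%:R.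
Proof.
have hp := den_gt0.
rewrite /q mulrC ler_pdivrMr // total_rateE.
have := Itot_le z; nra.
Qed.

Lemma inS_upd z x v : inS z -> (ocnt v <= K)%N -> inS (upd z x v).
Proof. by move=> h hv y; rewrite cnt_upd; case: (y == x). Qed.

Lemma claim j : forall n b, 0 <= b -> (forall z, inS z -> S n z <= b) ->
  forall z, inS z -> (Tn z <= j)%N -> S (n + j) z <= (1 - q ^+ j) * b.
Proof.
elim: j => [|j IH] n b hb Hb z hz hT.
  have h : is_empty z.
    by apply/forallP => x; have := cnt_le_Tn z x; move: hT; rewrite leqn0 => /eqP ->; rewrite leqn0.
  by rewrite surv_empty // expr0 subrr mul0r.
have hqj := qn_ge0 j.
have hq1 := qn_le1 j.
case: (boolP (is_empty z)) => h.
  rewrite surv_empty //; apply: mulr_ge0 => //; by rewrite subr_ge0 qn_le1.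
rewrite addnS; apply: le_trans (@step_bound (n + j) z ((1 - q ^+ j) * b) b h _ _) _.
- move=> x; case: (posnP (cnt z x)) => hc.
    by rewrite /heal_rate hc !mul0r.
  apply: ler_wpM2l; first exact: heal_ge0.
  apply: IH => //.
    by apply: inS_upd => //=; have := hz x; lia.
  by have := Tn_upd z x (Some (cnt z x).-1); rewrite /=; lia.
- move=> x; apply: ler_wpM2l; first exact: inf_ge0.
  have h2 : S (n + j) (upd z x None) <= b.
    by apply: le_trans (surv_monoN _ _ _) (Hb _ _); apply: inS_upd.
  have p0 := phi0' (cnt z x).+1; have p1 := phi1' (cnt z x).+1.
  have s2 := surv_ge0 (n + j) (upd z x None).
  case: (leqP M (cnt z x).+1) => hM.
    rewrite phiM // subrr mul0r addr0 mul1r //.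
  have h3 : S (n + j) (upd z x (Some (cnt z x).+1)) <= b.
    apply: le_trans (surv_monoN _ _ _) (Hb _ _); apply: inS_upd => //=; lia.
  have s3 := surv_ge0 (n + j) (upd z x (Some (cnt z x).+1)).
  nra.
- have hW := total_pos z h; rewrite ler_pdivrMr //.
  have := qW z; rewrite total_rateE => hqw.
  rewrite exprSr.
  have hP : 0 <= q ^+ j * b * ((Tn z)%:R - q * ((Tn z)%:R + Itot z)).
    by apply: mulr_ge0; [exact: mulr_ge0 | rewrite subr_ge0].
  nra.
Qed.

Definition N := (K * #|V|)%N.
Definition r : R := 1 - q ^+ N.

Lemma Tn_le z : inS z -> (Tn z <= N)%N.
Proof.
move=> hz; rewrite /Tn /N mulnC -sum_nat_const; apply: leq_sum => x _; exact: hz.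
Qed.

Lemma iter m : forall z, inS z -> S (m * N) z <= r ^+ m.
Proof.
elim: m => [|m IH] z hz; first by rewrite mul0n expr0 surv_le1.
rewrite mulSn addnC exprS.
apply: claim => //; [| exact: Tn_le].
by rewrite exprn_ge0 // subr_ge0 qn_le1.
Qed.

Lemma r_ge0 : 0 <= r.
Proof. by rewrite subr_ge0 qn_le1. Qed.
Lemma r_lt1 : r < 1.
Proof. by rewrite /r ltrBlDr ltrDl exprn_gt0 // q_gt0. Qed.

End Proof.

Theorem theorem2p1 (R : realType) (V : finType) (e : rel V)
  (He_sym : symmetric e) (He_irr : irreflexive e)
  (phi : nat -> R) (M : nat)
  (phi_mono : forall m n : nat, (m <= n)%N -> phi m <= phi n)
  (phi_range : forall k : nat, 0 <= phi k <= 1)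
  (phi0 : phi 0%N = 0)
  (phiM : forall k : nat, (M <= k)%N -> phi k = 1)
  (lam : R) (lam_gt0 : 0 < lam)
  (z0 : config V) :
  surv_within e lam phi n z0 @[n --> \oo] --> (0 : R^o).
Proof.
pose K := maxn M (\max_x cnt z0 x).
have MK : (M <= K)%N by rewrite leq_maxl.
have hz0 : inS V K z0.
  move=> x; apply: leq_trans (leq_maxr _ _); exact: leq_bigmax.
have r0 := @r_ge0 R V lam lam_gt0 K.
have hr1 : `|r R V lam K| < 1 by rewrite ger0_norm // r_lt1.
have hr := cvg_expr hr1.
apply/cvgr0Pnorm_lt => eps heps.
have := proj1 (@cvgr0Pnorm_lt _ _ _ _ _ _) hr eps heps.
case=> m0 _ Hm0.
exists (m0 * N V K)%N => // n /= hn.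
have := Hm0 m0 (leqnn _); rewrite /= => hlt.
rewrite ger0_norm; last exact: (surv_ge0 _ _ _ _ _ lam_gt0 phi_range).
apply: le_lt_trans hlt; rewrite ger0_norm ?exprn_ge0 //.
rewrite -(subnKC hn).
apply: le_trans; first exact: (surv_monoN _ _ _ _ _ lam_gt0 phi_range).
exact: (iter _ _ _ _ _ lam_gt0 phi_range _ _ phiM MK).
Qed.
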